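(* Let $K$ be a commutative artinian ring and $R$ an artin $K$-algebra. For any pp pair $\varphi/\psi$ in the language of left $R$-modules, $\mathbb{F}_{\varphi/\psi}^*\cong\mathbb{A}_{\varphi/\psi}$ as functors $(R\text{-}\mathbf{Mod})^{\mathrm{op}}\to\mathbf{Ab}$.
   Context: $J=\bigoplus_i E(S_i)$ over representatives $S_i$ of simple $K$-modules, $M^*=\mathrm{Hom}_K(M,J)$. A pp formula $\theta(x_1,\dots,x_n)$ in the language of left $R$-modules is $\exists y_1,\dots,y_m\, A\bar x=B\bar y$ with $A,B$ matrices over $R$; $\theta(M)\subseteq M^n$ denotes its solution set in a left module $M$ (a subgroup, preserved by homomorphisms). A pp pair $\varphi/\psi$ consists of pp formulas in the same free variables with $\psi(M)\subseteq\varphi(M)$ for all $M$. $\mathbb{F}_{\varphi/\psi}:R\text{-}\mathbf{Mod}\to\mathbf{Ab}$ sends $M$ to $\varphi(M)/\psi(M)$; its dual $\mathbb{F}_{\varphi/\psi}^*$ sends $M$ to $(\varphi(M)/\psi(M))^*$ (a $K$-module dual, using that the values are $K$-modules). For a pp formula $\theta$ in $n$ variables, $\mathbb{A}_\theta(M)=\{\bar f\in (M^* )^n:\sum_i f_i(a_i)=0\ \forall \bar a\in\theta(M)\}$, and $\mathbb{A}_{\varphi/\psi}=\mathbb{A}_\psi/\mathbb{A}_\varphi$. *)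

(* Defs.v *)
From HB Require Import structures.
From mathcomp Require Import all_boot all_order all_algebra.
Set Implicit Arguments.
Unset Strict Implicit.
Unset Printing Implicit Defensive.
Import GRing.Theory.
Local Open Scope ring_scope.

Definition is_ideal (K : comNzRingType) (I : K -> Prop) : Prop :=
  I 0 /\ (forall a b, I a -> I b -> I (a + b)) /\ (forall a b, I b -> I (a * b)).

Definition artinian_ring (K : comNzRingType) : Prop :=
  forall I : nat -> K -> Prop,
    (forall k, is_ideal (I k)) ->
    (forall k x, I k.+1 x -> I k x) ->
    exists N, forall k, (N <= k)%N -> forall x, I k x <-> I N x.

Definition artin_algebra (K : comNzRingType) (R : algType K) : Prop :=
  exists s : seq R, forall r : R,
    exists c : 'I_(size s) -> K, r = \sum_(i < size s) c i *: s`_i.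

Definition submod (K : comNzRingType) (V : lmodType K) (P : V -> Prop) : Prop :=
  P 0 /\ (forall u v, P u -> P v -> P (u + v)) /\ (forall (k : K) v, P v -> P (k *: v)).

Definition simple_mod (K : comNzRingType) (V : lmodType K) : Prop :=
  (exists v : V, v <> 0) /\
  forall P : V -> Prop, submod P -> (forall v, P v -> v = 0) \/ (forall v, P v).

Definition iso_mod (K : comNzRingType) (U V : lmodType K) : Prop :=
  exists f : {linear U -> V}, bijective f.

Definition injective_mod (K : comNzRingType) (E : lmodType K) : Prop :=
  forall (A B : lmodType K) (i : {linear A -> B}) (g : {linear A -> E}),
    injective i -> exists h : {linear B -> E}, forall a, h (i a) = g a.

Definition inj_envelope (K : comNzRingType) (S E : lmodType K)
  (iota : {linear S -> E}) : Prop :=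
  injective iota /\ injective_mod E /\
  forall P : E -> Prop, submod P -> (exists e, P e /\ e <> 0) ->
    exists s, s <> 0 /\ P (iota s).

(* J is (isomorphic to) the direct sum of the injective envelopes E(S_i) of a
   system of representatives S_i of the isomorphism classes of simple K-modules.
   (For K artinian there are finitely many such classes.) *)
Definition is_J (K : comNzRingType) (J : lmodType K) : Prop :=
  exists (t : nat) (S E : 'I_t -> lmodType K)
         (iota : forall i, {linear S i -> E i})
         (inj : forall i, {linear E i -> J}) (pr : forall i, {linear J -> E i}),
    [/\ (forall i, simple_mod (S i)),
        (forall i j, iso_mod (S i) (S j) -> i = j),
        (forall S' : lmodType K, simple_mod S' -> exists i, iso_mod S' (S i)),
        (forall i, inj_envelope (iota i))
      & [/\ (forall i e, pr i (inj i e) = e),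
            (forall i j e, i != j -> pr j (inj i e) = 0)
          & (forall x, x = \sum_i inj i (pr i x))]].

(* theta(x_1..x_n) = exists y_1..y_m, A x = B y, with A : p x n, B : p x m *)
Record ppformula (R : nzRingType) (n : nat) := PPFormula {
  pp_p : nat; pp_m : nat;
  pp_A : 'M[R]_(pp_p, n); pp_B : 'M[R]_(pp_p, pp_m) }.

Definition ppsol (R : nzRingType) (n : nat) (theta : ppformula R n)
  (M : lmodType R) (x : 'I_n -> M) : Prop :=
  exists y : 'I_(pp_m theta) -> M, forall i : 'I_(pp_p theta),
    \sum_(j < n) pp_A theta i j *: x j = \sum_(k < pp_m theta) pp_B theta i k *: y k.

Arguments ppsol {R n} theta M x.

Definition pp_pair (R : nzRingType) (n : nat) (phi psi : ppformula R n) : Prop :=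
  forall (M : lmodType R) (x : 'I_n -> M), ppsol psi M x -> ppsol phi M x.

Definition Kdual (K : comNzRingType) (R : algType K) (M : lmodType R)
  (J : lmodType K) (f : M -> J) : Prop :=
  (forall x y, f (x + y) = f x + f y) /\ (forall (k : K) x, f (k%:A *: x) = k *: f x).

Definition annih (K : comNzRingType) (R : algType K) (n : nat)
  (theta : ppformula R n) (M : lmodType R) (J : lmodType K)
  (f : 'I_n -> M -> J) : Prop :=
  (forall i, Kdual (f i)) /\
  (forall x, ppsol theta M x -> \sum_(i < n) f i (x i) = 0).

Arguments annih {K R n} theta M J f.
Arguments Kdual {K R M J} f.

(* Elements of F^*_{phi/psi}(M) = Hom_K(phi(M)/psi(M), J), represented by maps
   g : M^n -> J that are K-linear on phi(M) and vanish on psi(M); two such maps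
   represent the same element iff they agree on phi(M) (see eq_on_pp). *)
Definition Fdual (K : comNzRingType) (R : algType K) (n : nat)
  (phi psi : ppformula R n) (M : lmodType R) (J : lmodType K)
  (g : ('I_n -> M) -> J) : Prop :=
  [/\ (forall x y, ppsol phi M x -> ppsol phi M y ->
         g (fun i => x i + y i) = g x + g y),
      (forall (k : K) x, ppsol phi M x -> g (fun i => k%:A *: x i) = k *: g x)
    & (forall x, ppsol psi M x -> g x = 0)].

Arguments Fdual {K R n} phi psi M J g.

Definition eq_on_pp (R : nzRingType) (n : nat) (phi : ppformula R n)
  (M : lmodType R) (J : Type) (g g' : ('I_n -> M) -> J) : Prop :=
  forall x, ppsol phi M x -> g x = g' x.
Arguments eq_on_pp {R n} phi {M J} g g'.

(* Main.v *)
Require Import Defs.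
From HB Require Import structures.
From mathcomp Require Import all_boot all_order all_algebra.
From Stdlib Require Import ClassicalEpsilon FunctionalExtensionality.
Import GRing.Theory.
Local Open Scope ring_scope.

Definition asb (P : Prop) : bool := if excluded_middle_informative P then true else false.
Lemma asbP (P : Prop) : reflect P (asb P).
Proof. rewrite /asb; case: excluded_middle_informative => h; constructor => //. Qed.

Section PP.
Variables (R : nzRingType) (n : nat) (theta : ppformula R n) (M : lmodType R).

Lemma ppsol0 : ppsol theta M (fun _ => 0).
Proof. exists (fun _ => 0) => i; rewrite !big1 // => j _; exact: scaler0. Qed.

Lemma ppsolD x y : ppsol theta M x -> ppsol theta M y -> ppsol theta M (fun i => x i + y i).
Proof.
case=> u hu [v hv]; exists (fun k => u k + v k) => i.
rewrite (eq_bigr (fun j => pp_A theta i j *: x j + pp_A theta i j *: y j)); last by move=> j _; rewrite scalerDr.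
rewrite big_split /= hu hv -big_split /=; apply: eq_bigr => k _; by rewrite scalerDr.
Qed.

Lemma ppsolN x : ppsol theta M x -> ppsol theta M (fun i => - x i).
Proof.
case=> u hu; exists (fun k => - u k) => i.
rewrite (eq_bigr (fun j => - (pp_A theta i j *: x j))); last by move=> j _; rewrite scalerN.
rewrite sumrN hu -sumrN; apply: eq_bigr => k _; by rewrite scalerN.
Qed.
End PP.

Lemma ppsolZ (K : comNzRingType) (R : algType K) n (theta : ppformula R n) (M : lmodType R) (k : K) x :
  ppsol theta M x -> ppsol theta M (fun i => k%:A *: x i).
Proof.
case=> u hu; exists (fun j => k%:A *: u j) => i.
have E : forall (r : R) (m : M), r *: (k%:A *: m) = k%:A *: (r *: m).
  by move=> r m; rewrite !scalerA -scalerAl mul1r -scalerAr mulr1.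
rewrite (eq_bigr (fun j => k%:A *: (pp_A theta i j *: x j))); last by move=> j _; rewrite E.
rewrite -scaler_sumr hu scaler_sumr; apply: eq_bigr => j _; by rewrite E.
Qed.

Section Res.
Variables (K : comNzRingType) (R : algType K) (M : lmodType R).
Definition resM : Type := M.
End Res.
Arguments resM {K R} M.
Section Res2.
Variables (K : comNzRingType) (R : algType K) (M : lmodType R).
HB.instance Definition _ := GRing.Zmodule.on (resM M).
Definition resZ (k : K) (x : resM M) : resM M := (k%:A *: (x : M)).
Lemma resZA a b v : resZ a (resZ b v) = resZ (a * b) v.
Proof. by rewrite /resZ scalerA -scalerAl mul1r scalerA. Qed.
Lemma resZ1 : left_id 1 resZ.
Proof. by move=> v; rewrite /resZ scale1r scale1r. Qed.
Lemma resZDr : right_distributive resZ +%R.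
Proof. by move=> a u v; rewrite /resZ scalerDr. Qed.
Lemma resZDl v : {morph resZ^~ v: a b / a + b}.
Proof. by move=> a b; rewrite /resZ scalerDl scalerDl. Qed.
HB.instance Definition _ := GRing.Zmodule_isLmodule.Build K (resM M) resZA resZ1 resZDr resZDl.
End Res2.

Section Sub.
Variables (K : comNzRingType) (R : algType K) (M : lmodType R) (n : nat) (phi : ppformula R n).
Definition BB : lmodType K := {ffun 'I_n -> resM M}.
Definition Pphi (x : BB) : bool := asb (ppsol phi M (fun i => (x i : M))).
Definition AA : Type := {x : BB | Pphi x}.
HB.instance Definition _ := Choice.on AA.
Lemma Pphi0 : Pphi 0.
Proof. apply/asbP; rewrite (_ : (fun i => _) = (fun _ => 0)); first exact: ppsol0.
by apply: functional_extensionality => i; rewrite ffunE. Qed.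
Lemma PphiD x y : Pphi x -> Pphi y -> Pphi (x + y).
Proof. move=> /asbP hx /asbP hy; apply/asbP.
rewrite (_ : (fun i => _) = (fun i => (x i : M) + y i)); first exact: ppsolD.
by apply: functional_extensionality => i; rewrite ffunE. Qed.
Lemma PphiN x : Pphi x -> Pphi (- x).
Proof. move=> /asbP hx; apply/asbP.
rewrite (_ : (fun i => _) = (fun i => - (x i : M))); first exact: ppsolN.
by apply: functional_extensionality => i; rewrite ffunE. Qed.
Lemma PphiZ k x : Pphi x -> Pphi (k *: x).
Proof. move=> /asbP hx; apply/asbP.
rewrite (_ : (fun i => _) = (fun i => k%:A *: (x i : M))); first exact: ppsolZ.
by apply: functional_extensionality => i; rewrite ffunE. Qed.
Definition A0 : AA := exist _ 0 Pphi0.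
Definition Aadd (a b : AA) : AA := exist _ (val a + val b) (PphiD _ _ (valP a) (valP b)).
Definition Aopp (a : AA) : AA := exist _ (- val a) (PphiN _ (valP a)).
Definition AZ k (a : AA) : AA := exist _ (k *: val a) (PphiZ k _ (valP a)).
Lemma AaddA : associative Aadd. Proof. by move=> ???; apply: val_inj; rewrite /= addrA. Qed.
Lemma AaddC : commutative Aadd. Proof. by move=> ??; apply: val_inj; rewrite /= addrC. Qed.
Lemma Aadd0 : left_id A0 Aadd. Proof. by move=> ?; apply: val_inj; rewrite /= add0r. Qed.
Lemma AaddN : left_inverse A0 Aopp Aadd. Proof. by move=> ?; apply: val_inj; rewrite /= addNr. Qed.
HB.instance Definition _ := GRing.isZmodule.Build AA AaddA AaddC Aadd0 AaddN.
Lemma AZA a b v : AZ a (AZ b v) = AZ (a * b) v. Proof. by apply: val_inj; rewrite /= scalerA. Qed.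
Lemma AZ1 : left_id 1 AZ. Proof. by move=> ?; apply: val_inj; rewrite /= scale1r. Qed.
Lemma AZDr : right_distributive AZ +%R. Proof. by move=> ???; apply: val_inj; rewrite /= scalerDr. Qed.
Lemma AZDl v : {morph AZ^~ v: a b / a + b}. Proof. by move=> ??; apply: val_inj; rewrite /= scalerDl. Qed.
HB.instance Definition _ := GRing.Zmodule_isLmodule.Build K AA AZA AZ1 AZDr AZDl.
Definition ival (a : AA) : BB := val a.
Lemma ival_lin : linear ival. Proof. by []. Qed.
HB.instance Definition _ := GRing.isLinear.Build K AA BB *:%R ival ival_lin.

Variables (J : lmodType K) (g : ('I_n -> M) -> J).
Hypothesis gD : forall x y, ppsol phi M x -> ppsol phi M y ->
         g (fun i => x i + y i) = g x + g y.
Hypothesis gZ : forall (k : K) x, ppsol phi M x -> g (fun i => k%:A *: x i) = k *: g x.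
Definition gA (a : AA) : J := g (fun i => (val a i : M)).
Lemma gA_lin : linear gA.
Proof.
move=> k a b; rewrite /gA /=.
have ha := asbP _ (valP a); have hb := asbP _ (valP b).
rewrite -gZ // -gD //; last exact: ppsolZ.
by congr g; apply: functional_extensionality => i; rewrite !ffunE.
Qed.
HB.instance Definition _ := GRing.isLinear.Build K AA J *:%R gA gA_lin.

Lemma extend_g : injective_mod J ->
  exists f : 'I_n -> M -> J, (forall i, Kdual (f i)) /\
    forall x, ppsol phi M x -> \sum_(i < n) f i (x i) = g x.
Proof.
move=> HJ.
have ivi : injective ival by move=> a b; apply: val_inj.
have [h hh] := HJ AA BB ival gA ivi.
exists (fun i (m : M) => h ([ffun j => if j == i then (m : resM M) else 0] : BB)).
split.
  move=> i; split.
    move=> x y; rewrite -raddfD; apply: (congr1 h); apply/ffunP => j; rewrite !ffunE.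
    by case: (j == i); rewrite ?addr0.
  move=> k x; rewrite -linearZ; apply: (congr1 h); apply/ffunP => j; rewrite !ffunE.
  by case: (j == i) => //; rewrite /= /resZ scaler0.
move=> x hx.
have px : Pphi ([ffun i => (x i : resM M)] : BB).
  apply/asbP; rewrite (_ : (fun i => _) = x) //.
  by apply: functional_extensionality => i; rewrite ffunE.
rewrite -raddf_sum.
transitivity (h (ival (exist (fun z => Pphi z) _ px : AA))).
  apply: (congr1 h).
  apply/ffunP => j; rewrite sum_ffunE /= ffunE (bigD1 j) //= ffunE eqxx big1 ?addr0 //.
  by move=> i /negbTE ne; rewrite ffunE eq_sym ne.
rewrite hh /gA /=; congr g; apply: functional_extensionality => i; by rewrite ffunE.
Qed.
End Sub.
Local Open Scope ring_scope.

Section SumLin.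
Variables (K : comNzRingType) (B J : lmodType K) (t : nat) (E : 'I_t -> lmodType K)
  (inj : forall i, {linear E i -> J}) (hj : forall i, {linear B -> E i}).
Definition sumf (b : B) : J := \sum_i inj i (hj i b).
Lemma sumf_lin : linear sumf.
Proof.
move=> k a b; rewrite /sumf scaler_sumr -big_split /=; apply: eq_bigr => i _.
by rewrite linearP linearP.
Qed.
HB.instance Definition _ := GRing.isLinear.Build K B J *:%R sumf sumf_lin.
End SumLin.
Arguments sumf {K B J t E} inj hj b.

Lemma J_inj (K : comNzRingType) (J : lmodType K) : is_J J -> injective_mod J.
Proof.
case=> t [S [E [iota [inj [pr [_ _ _ Henv [Hpi _ Hsum]]]]]]].
move=> A B i g ii.
have Hj : forall j, exists h : {linear B -> E j}, forall a, h (i a) = pr j (g a).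
  move=> j; case: (Henv j) => _ [HE _].
  exact: (HE A B i (pr j \o g)%FUN ii).
have [hj hhj] : exists hj : forall j, {linear B -> E j}, forall j a, hj j (i a) = pr j (g a).
  exists (fun j => proj1_sig (constructive_indefinite_description _ (Hj j))).
  move=> j a; exact: (proj2_sig (constructive_indefinite_description _ (Hj j))).
exists (sumf (B:=B) inj hj) => a; rewrite /sumf (Hsum (g a)); apply: eq_bigr => j _.
by rewrite hhj.
Qed.
Local Open Scope ring_scope.

Theorem mainTheorem2 (K : comNzRingType) (R : algType K) (J : lmodType K)
  (n : nat) (phi psi : ppformula R n) :
  artinian_ring K -> artin_algebra R -> is_J J -> pp_pair phi psi ->
  exists beta : forall M : lmodType R, ('I_n -> M -> J) -> ('I_n -> M) -> J,
    [/\ (forall (M : lmodType R) f, annih psi M J f -> Fdual phi psi M J (beta M f)),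
        (forall (M : lmodType R) f f', annih psi M J f -> annih psi M J f' ->
           eq_on_pp phi (beta M (fun i m => f i m + f' i m))
                        (fun x => beta M f x + beta M f' x)),
        (forall (M : lmodType R) g, Fdual phi psi M J g ->
           exists f, annih psi M J f /\ eq_on_pp phi (beta M f) g),
        (forall (M : lmodType R) f, annih psi M J f ->
           (eq_on_pp phi (beta M f) (fun _ => 0) <-> annih phi M J f))
      & (forall (M N : lmodType R) (h : {linear M -> N}) f, annih psi N J f ->
           eq_on_pp phi (beta M (fun i m => f i (h m)))
                        (fun x => beta N f (fun i => h (x i))))].
Proof.
move=> _ _ HJ Hpp.
exists (fun M f x => \sum_(i < n) f i (x i)); split.
- move=> M f [Hd Ha]; split.
  + move=> x y _ _; rewrite -big_split; apply: eq_bigr => i _.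
    by case: (Hd i) => -> _.
  + move=> k x _; rewrite scaler_sumr; apply: eq_bigr => i _.
    by case: (Hd i) => _ ->.
  + exact: Ha.
- by move=> M f f' _ _ x _; rewrite -big_split.
- move=> M g [gD gZ g0].
  have [f [Hf Hs]] := @extend_g K R M n phi J g gD gZ (@J_inj K J HJ).
  exists f; split; last by move=> x hx; rewrite Hs.
  split => // x hx; rewrite Hs; [exact: g0 | exact: Hpp].
- move=> M f [Hd Ha]; split.
  + by move=> H; split => // x hx; exact: H.
  + by case=> _ H x hx; exact: H.
- by [].
Qed.
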